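(* Let $X$ be a shift space, $Y$ an irreducible shift space, and $\phi : X \to Y$ an open code which is bi-closing. Then $\phi$ is constant-to-one.
   Context: Shift spaces are closed shift-invariant subsets of $\mathcal{A}^{\mathbb{Z}}$; a code is a continuous shift-commuting map. Irreducible: for all words $u,v$ of $Y$ there is $w$ with $uwv$ a word of $Y$. Open: images of open sets are open. Constant-to-one: all fibers finite with cardinality independent of $y$. Bi-closing: never identifies two distinct left asymptotic points nor two distinct right asymptotic points, where $x,\bar x$ are left (right) asymptotic if $d(\sigma^{-n}x,\sigma^{-n}\bar x)\to0$ ($d(\sigma^{n}x,\sigma^{n}\bar x)\to0$), $d(x,\bar x)=2^{-k}$ with $k$ maximal such that $x_{[-k,k]}=\bar x_{[-k,k]}$. *)

(* Defs.v *)
From Stdlib Require Import ZArith List.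
From mathcomp Require Import all_boot.

Set Implicit Arguments.
Unset Strict Implicit.
Unset Printing Implicit Defensive.

Open Scope Z_scope.

Definition config (A : Type) := Z -> A.

Definition shift {A : Type} (x : config A) : config A := fun i => x (i + 1).

Definition shiftn {A : Type} (n : Z) (x : config A) : config A :=
  fun i => x (i + n).

(* x and y agree on [-k,k], i.e. d(x,y) <= 2^{-k}. *)
Definition agree {A : Type} (k : Z) (x y : config A) : Prop :=
  forall i, -k <= i <= k -> x i = y i.

(* Closed in the metric topology of A^Z: contains its limit points. *)
Definition closed_set {A : Type} (X : config A -> Prop) : Prop :=
  forall x, (forall k, exists y, X y /\ agree k x y) -> X x.

Definition shift_space {A : finType} (X : config A -> Prop) : Prop :=
  closed_set X /\ (forall x, X x <-> X (shift x)).

Definition is_word {A : Type} (X : config A -> Prop) (w : list A) : Prop :=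
  exists x, X x /\ exists i : Z,
    forall j : nat, (j < length w)%nat ->
      forall d, x (i + Z.of_nat j) = List.nth j w d.

Definition irreducible {A : Type} (X : config A -> Prop) : Prop :=
  forall u v, is_word X u -> is_word X v ->
    exists w, is_word X (u ++ w ++ v).

Definition code {A B : Type} (X : config A -> Prop) (Y : config B -> Prop)
  (phi : config A -> config B) : Prop :=
  (forall x, X x -> Y (phi x)) /\
  (forall x, X x -> forall k, exists m, forall x', X x' ->
      agree m x x' -> agree k (phi x) (phi x')) /\
  (forall x, X x -> phi (shift x) = shift (phi x)).

Definition rel_open {A : Type} (X U : config A -> Prop) : Prop :=
  (forall x, U x -> X x) /\
  (forall x, U x -> exists k, forall x', X x' -> agree k x x' -> U x').

Definition open_code {A B : Type} (X : config A -> Prop) (Y : config B -> Prop)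
  (phi : config A -> config B) : Prop :=
  forall U, rel_open X U -> rel_open Y (fun y => exists x, U x /\ phi x = y).

Definition left_asymptotic {A : Type} (x xb : config A) : Prop :=
  forall k, exists N : Z, forall n, N <= n ->
    agree k (shiftn (- n) x) (shiftn (- n) xb).

Definition right_asymptotic {A : Type} (x xb : config A) : Prop :=
  forall k, exists N : Z, forall n, N <= n ->
    agree k (shiftn n x) (shiftn n xb).

Definition bi_closing {A B : Type} (X : config A -> Prop)
  (phi : config A -> config B) : Prop :=
  forall x xb, X x -> X xb -> x <> xb ->
    (left_asymptotic x xb -> phi x <> phi xb) /\
    (right_asymptotic x xb -> phi x <> phi xb).

Definition constant_to_one {A B : Type} (X : config A -> Prop)
  (Y : config B -> Prop) (phi : config A -> config B) : Prop :=
  exists c : nat, forall y, Y y ->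
    exists s : list (config A), NoDup s /\ length s = c /\
      (forall x, (X x /\ phi x = y) <-> In x s).

(* Main.v *)
Require Import Defs.
From Stdlib Require Import ZArith List.
From mathcomp Require Import all_boot.
From Stdlib Require Import Lia Classical.
From mathcomp Require Import zify.
From mathcomp Require Import boolp.
Import Defs.

Set Implicit Arguments.
Unset Strict Implicit.
Unset Printing Implicit Defensive.

Lemma agree_mono (A : Type) (k k' : Z) (x y : config A) :
  k' <= k -> agree k x y -> agree k' x y.
Proof. move=> Hk H i Hi; apply: H; lia. Qed.

Lemma agree_sym (A : Type) (k : Z) (x y : config A) : agree k x y -> agree k y x.
Proof. move=> H i Hi; symmetry; exact: H. Qed.

Lemma agree_trans (A : Type) (k : Z) (x y z : config A) :
  agree k x y -> agree k y z -> agree k x z.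
Proof. move=> H1 H2 i Hi; rewrite H1 // H2 //. Qed.

Definition infinitely (Q : nat -> Prop) := forall n0, exists n, (n0 <= n)%N /\ Q n.

Lemma pigeon (T : finType) (Q : nat -> Prop) (f : nat -> T) :
  infinitely Q -> exists t, infinitely (fun n => Q n /\ f n = t).
Proof.
move=> HQ; apply: NNPP => H.
have H1 : forall t, exists n0, forall n, (n0 <= n)%N -> Q n -> f n <> t.
  move=> t; apply: NNPP => H2; apply: H; exists t => n0.
  apply: NNPP => H3; apply: H2; exists n0 => n Hn HQn Hf; apply: H3.
  by exists n.
pose g t := sval (cid (H1 t)).
have Hg : forall t n, (g t <= n)%N -> Q n -> f n <> t.
  by move=> t; exact: (svalP (cid (H1 t))).
have [n [Hn HQn]] := HQ (\max_t g t).
apply: (Hg (f n) n) => //; apply: leq_trans Hn; exact: leq_bigmax.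
Qed.

Definition Good (C : Type) (xs : nat -> config C) k w :=
  infinitely (fun n => agree k w (xs n)).

Lemma step_ex (C : finType) (xs : nat -> config C) k w :
  Good xs k w -> exists w', agree k w w' /\ Good xs (k+1) w'.
Proof.
move=> H.
have [[a b] Hab] := pigeon (fun n => (xs n (-(k+1)), xs n (k+1))) H.
exists (fun i => if Z.eq_dec i (-(k+1)) then a else if Z.eq_dec i (k+1) then b else w i).
split.
  move=> i Hi; case: Z.eq_dec => [?|?]; first lia.
  case: Z.eq_dec => [?|?] //; lia.
move=> n0; have [n [Hn [Hag Hf]]] := Hab n0; exists n; split => // i Hi.
case: Z.eq_dec => [Hi1|Hi1]; first by subst i; case: Hf.
case: Z.eq_dec => [Hi2|Hi2]; first by subst i; case: Hf.
apply: Hag; lia.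
Qed.

Definition stepf (C : finType) (xs : nat -> config C) k w (H : Good xs k w) :=
  cid (step_ex H).

Fixpoint lvl (j : nat) : Z := match j with 0%N => -1 | S j => lvl j + 1 end.

Lemma lvlE j : lvl j = Z.of_nat j - 1.
Proof. elim: j => [|j IH]; first by []. change (lvl j.+1) with (lvl j + 1). rewrite IH; lia. Qed.

Lemma good0 (C : Type) (xs : nat -> config C) : Good xs (-1) (xs 0%N).
Proof. move=> n0; exists n0; split => // i Hi; lia. Qed.

Fixpoint Wseq (C : finType) (xs : nat -> config C) (j : nat) : {w | Good xs (lvl j) w} :=
  match j with
  | 0%N => exist _ (xs 0%N) (good0 xs)
  | S j' => let (w, H) := Wseq xs j' in
            exist _ (sval (stepf H)) (proj2 (svalP (stepf H)))
  end.

Lemma Wseq_succ (C : finType) (xs : nat -> config C) j :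
  agree (lvl j) (sval (Wseq xs j)) (sval (Wseq xs j.+1)).
Proof. rewrite /=; case: (Wseq xs j) => w H /=; exact: (proj1 (svalP (stepf H))). Qed.

Lemma Wseq_cons (C : finType) (xs : nat -> config C) j d :
  agree (lvl j) (sval (Wseq xs j)) (sval (Wseq xs (j + d))).
Proof.
elim: d => [|d IH]; first by rewrite addn0 => i.
apply: agree_trans IH _; rewrite addnS; apply: agree_mono; last exact: Wseq_succ.
rewrite !lvlE; lia.
Qed.

Lemma cluster (C : finType) (R : nat -> config C -> Prop) :
  (forall n, exists z, R n z) ->
  exists p, forall (k : Z) (n0 : nat), exists n z, (n0 <= n)%N /\ R n z /\ agree k p z.
Proof.
move=> H.
pose xs n := sval (cid (H n)).
pose p := fun i => sval (Wseq xs (S (Z.to_nat (Z.abs i)))) i.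
have Hp : forall j, agree (lvl j) p (sval (Wseq xs j)).
  move=> j i Hi; rewrite /p.
  set m := S (Z.to_nat (Z.abs i)).
  have Hmj : (m <= j)%N by rewrite lvlE in Hi; rewrite /m; lia.
  have := @Wseq_cons _ xs m (j - m)%N; rewrite subnKC // => Hc.
  apply: Hc; rewrite /m lvlE; lia.
exists p => k n0.
set j := S (Z.to_nat (Z.abs k)).
have [n [Hn Hag]] := svalP (Wseq xs j) n0.
exists n, (xs n); split => //; split; first exact: (svalP (cid (H n))).
apply: agree_mono (agree_trans (Hp j) Hag); rewrite /j lvlE; lia.
Qed.

Lemma shiftn_shift (A : Type) a (x : config A) : shift (shiftn a x) = shiftn (a + 1) x.
Proof. apply: funext => i; rewrite /shift /shiftn; f_equal; lia. Qed.

Lemma shiftn_shift' (A : Type) a (x : config A) : shiftn a (shift x) = shiftn (a + 1) x.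
Proof. apply: funext => i; rewrite /shift /shiftn; f_equal; lia. Qed.

Lemma shiftnA (A : Type) a b (x : config A) : shiftn a (shiftn b x) = shiftn (a + b) x.
Proof. apply: funext => i; rewrite /shiftn; f_equal; lia. Qed.

Lemma shiftn0 (A : Type) (x : config A) : shiftn 0 x = x.
Proof. apply: funext => i; rewrite /shiftn; f_equal; lia. Qed.

Lemma Z_nat_cases (P : Z -> Prop) :
  (forall m : nat, P (Z.of_nat m) /\ P (- Z.of_nat m)) -> forall n, P n.
Proof.
move=> H n; case: (Z_le_gt_dec 0 n) => Hn.
  by have := proj1 (H (Z.to_nat n)); rewrite Z2Nat.id.
by have := proj2 (H (Z.to_nat (- n))); rewrite Z2Nat.id ?Z.opp_involutive //; lia.
Qed.

Lemma X_shiftn (A : Type) (X : config A -> Prop) :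
  (forall x, X x <-> X (shift x)) -> forall n x, X x -> X (shiftn n x).
Proof.
move=> HX n x Hx; move: n; apply: Z_nat_cases => m.
elim: m => [|m [IH1 IH2]]; first by rewrite /= shiftn0.
rewrite Nat2Z.inj_succ; split.
  by rewrite -Z.add_1_r -shiftn_shift; apply (proj1 (HX _)).
apply (proj2 (HX _)); rewrite shiftn_shift.
by have -> : - Z.succ (Z.of_nat m) + 1 = - Z.of_nat m by lia.
Qed.

Lemma phi_shiftn (A B : Type) (X : config A -> Prop) (phi : config A -> config B) :
  (forall x, X x <-> X (shift x)) ->
  (forall x, X x -> phi (shift x) = shift (phi x)) ->
  forall n x, X x -> phi (shiftn n x) = shiftn n (phi x).
Proof.
move=> HX Hc n x Hx; move: n; apply: Z_nat_cases => m.
elim: m => [|m [IH1 IH2]]; first by rewrite /= !shiftn0.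
rewrite Nat2Z.inj_succ; split.
  rewrite -Z.add_1_r -!shiftn_shift Hc ?IH1 //; exact: X_shiftn.
set z := shiftn _ x.
have Hz : X z by exact: X_shiftn.
have E : shift z = shiftn (- Z.of_nat m) x.
  rewrite /z shiftn_shift; f_equal; lia.
have := Hc z Hz; rewrite E IH2 => E2.
have -> : phi z = shiftn (-1) (shift (phi z)).
  rewrite shiftn_shift'; have -> : (-1 + 1 = 0) by lia. by rewrite shiftn0.
rewrite -E2 shiftnA; f_equal; lia.
Qed.

Definition fstc (A : Type) (z : config (A * A)) : config A := fun i => (z i).1.
Definition sndc (A : Type) (z : config (A * A)) : config A := fun i => (z i).2.

Lemma agree_fst (A : Type) k (p z : config (A * A)) : agree k p z -> agree k (fstc p) (fstc z).
Proof. by move=> H i Hi; rewrite /fstc H. Qed.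
Lemma agree_snd (A : Type) k (p z : config (A * A)) : agree k p z -> agree k (sndc p) (sndc z).
Proof. by move=> H i Hi; rewrite /sndc H. Qed.

Lemma cont_eq (A B : Type) (X : config A -> Prop) (Y : config B -> Prop)
  (phi : config A -> config B) : code X Y phi ->
  forall u v, X u -> X v ->
  (forall m, exists z z', X z /\ X z' /\ agree m u z /\ agree m v z' /\ phi z = phi z') ->
  phi u = phi v.
Proof.
move=> [_ [Hcont _]] u v Hu Hv H; apply: funext => i.
have [m1 Hm1] := Hcont u Hu (Z.abs i).
have [m2 Hm2] := Hcont v Hv (Z.abs i).
have [z [z' [Hz [Hz' [Ha [Ha' E]]]]]] := H (Z.max m1 m2).
have E1 := Hm1 z Hz (agree_mono (Z.le_max_l _ _) Ha).
have E2 := Hm2 z' Hz' (agree_mono (Z.le_max_r _ _) Ha').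
rewrite (E1 i); last lia. rewrite (E2 i); last lia. by rewrite E.
Qed.

Lemma closing_right (A B : finType) (X : config A -> Prop) (Y : config B -> Prop)
  (phi : config A -> config B) :
  shift_space X -> code X Y phi -> bi_closing X phi ->
  exists N : nat, forall x x', X x -> X x' -> phi x = phi x' ->
    (forall i, - Z.of_nat N <= i <= -1 -> x i = x' i) -> x 0 = x' 0.
Proof.
move=> HX Hc Hbc; apply: NNPP => H.
pose R (n : nat) (z : config (A * A)) :=
  X (fstc z) /\ X (sndc z) /\ phi (fstc z) = phi (sndc z) /\
  (forall i, - Z.of_nat n <= i <= -1 -> (z i).1 = (z i).2) /\ (z 0).1 <> (z 0).2.
have HR : forall n, exists z, R n z.
  move=> n; apply: NNPP => Hn; apply: H; exists n => x x' Hx Hx' Hphi Hag.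
  apply: NNPP => Hneq; apply: Hn; exists (fun i => (x i, x' i)).
  by rewrite /R /fstc /sndc /=; split.
have [p Hp] := cluster HR.
set u := fstc p; set v := sndc p.
have Hu : X u.
  apply: (proj1 HX) => k; have [n [z [_ [[Hz _] Ha]]]] := Hp k 0%N.
  by exists (fstc z); split => //; exact: agree_fst.
have Hv : X v.
  apply: (proj1 HX) => k; have [n [z [_ [[_ [Hz _]] Ha]]]] := Hp k 0%N.
  by exists (sndc z); split => //; exact: agree_snd.
have H0 : u 0 <> v 0.
  have [n [z [_ [[_ [_ [_ [_ Hz]]]] Ha]]]] := Hp 0 0%N.
  by rewrite /u /v /fstc /sndc (Ha 0) //; lia.
have Hneg : forall i, i < 0 -> u i = v i.
  move=> i Hi; have [n [z [Hn [[_ [_ [_ [Hz _]]]] Ha]]]] := Hp (- i) (Z.to_nat (- i)).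
  rewrite /u /v /fstc /sndc (Ha i); last lia.
  apply: Hz; lia.
have Huv : phi u = phi v.
  apply: (cont_eq Hc) => // m; have [n [z [_ [[Hz [Hz' [E _]]] Ha]]]] := Hp m 0%N.
  exists (fstc z), (sndc z); split => //; split => //; split; first exact: agree_fst.
  by split => //; exact: agree_snd.
have Hla : left_asymptotic u v.
  move=> k; exists (k + 1) => n Hn i Hi; rewrite /shiftn; apply: Hneg; lia.
have Hne : u <> v by move=> E; apply: H0; rewrite E.
exact: (proj1 (Hbc u v Hu Hv Hne) Hla Huv).
Qed.

Lemma closing_left (A B : finType) (X : config A -> Prop) (Y : config B -> Prop)
  (phi : config A -> config B) :
  shift_space X -> code X Y phi -> bi_closing X phi ->
  exists N : nat, forall x x', X x -> X x' -> phi x = phi x' ->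
    (forall i, 1 <= i <= Z.of_nat N -> x i = x' i) -> x 0 = x' 0.
Proof.
move=> HX Hc Hbc; apply: NNPP => H.
pose R (n : nat) (z : config (A * A)) :=
  X (fstc z) /\ X (sndc z) /\ phi (fstc z) = phi (sndc z) /\
  (forall i, 1 <= i <= Z.of_nat n -> (z i).1 = (z i).2) /\ (z 0).1 <> (z 0).2.
have HR : forall n, exists z, R n z.
  move=> n; apply: NNPP => Hn; apply: H; exists n => x x' Hx Hx' Hphi Hag.
  apply: NNPP => Hneq; apply: Hn; exists (fun i => (x i, x' i)).
  by rewrite /R /fstc /sndc /=; split.
have [p Hp] := cluster HR.
set u := fstc p; set v := sndc p.
have Hu : X u.
  apply: (proj1 HX) => k; have [n [z [_ [[Hz _] Ha]]]] := Hp k 0%N.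
  by exists (fstc z); split => //; exact: agree_fst.
have Hv : X v.
  apply: (proj1 HX) => k; have [n [z [_ [[_ [Hz _]] Ha]]]] := Hp k 0%N.
  by exists (sndc z); split => //; exact: agree_snd.
have H0 : u 0 <> v 0.
  have [n [z [_ [[_ [_ [_ [_ Hz]]]] Ha]]]] := Hp 0 0%N.
  by rewrite /u /v /fstc /sndc (Ha 0) //; lia.
have Hpos : forall i, 0 < i -> u i = v i.
  move=> i Hi; have [n [z [Hn [[_ [_ [_ [Hz _]]]] Ha]]]] := Hp i (Z.to_nat i).
  rewrite /u /v /fstc /sndc (Ha i); last lia.
  apply: Hz; lia.
have Huv : phi u = phi v.
  apply: (cont_eq Hc) => // m; have [n [z [_ [[Hz [Hz' [E _]]] Ha]]]] := Hp m 0%N.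
  exists (fstc z), (sndc z); split => //; split => //; split; first exact: agree_fst.
  by split => //; exact: agree_snd.
have Hra : right_asymptotic u v.
  move=> k; exists (k + 1) => n Hn i Hi; rewrite /shiftn; apply: Hpos; lia.
have Hne : u <> v by move=> E; apply: H0; rewrite E.
exact: (proj2 (Hbc u v Hu Hv Hne) Hra Huv).
Qed.

Lemma closing_inj (A B : finType) (X : config A -> Prop) (Y : config B -> Prop)
  (phi : config A -> config B) :
  shift_space X -> code X Y phi -> bi_closing X phi ->
  exists N0 : nat, forall x x', X x -> X x' -> phi x = phi x' ->
    agree (Z.of_nat N0) x x' -> x = x'.
Proof.
move=> HX Hc Hbc.
have [N HR] := closing_right HX Hc Hbc.
have [N' HL] := closing_left HX Hc Hbc.
set M := maxn N N'.
have HM1 : (N <= M)%N by exact: leq_maxl.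
have HM2 : (N' <= M)%N by exact: leq_maxr.
exists M => x x' Hx Hx' E Hag.
have Hsh : forall t, X (shiftn t x) /\ X (shiftn t x') /\ phi (shiftn t x) = phi (shiftn t x').
  move=> t; split; first exact: X_shiftn (proj2 HX) _ _ Hx.
  split; first exact: X_shiftn (proj2 HX) _ _ Hx'.
  by rewrite !(phi_shiftn (proj2 HX) (proj2 (proj2 Hc))) // E.
have HR' : forall t, (forall i, - Z.of_nat N <= i <= -1 -> x (i + t) = x' (i + t)) -> x t = x' t.
  move=> t H; have [H1 [H2 H3]] := Hsh t.
  by have := HR _ _ H1 H2 H3 H; rewrite /shiftn Z.add_0_l.
have HL' : forall t, (forall i, 1 <= i <= Z.of_nat N' -> x (i + t) = x' (i + t)) -> x t = x' t.
  move=> t H; have [H1 [H2 H3]] := Hsh t.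
  by have := HL _ _ H1 H2 H3 H; rewrite /shiftn Z.add_0_l.
have Hall : forall n : nat, agree (Z.of_nat M + Z.of_nat n) x x'.
  elim=> [|n IH]; first by apply: agree_mono Hag; lia.
  move=> i Hi.
  case: (Z_le_gt_dec (Z.abs i) (Z.of_nat M + Z.of_nat n)) => Hin.
    apply: IH; lia.
  case: (Z_le_gt_dec 0 i) => Hs.
    apply: HR' => j Hj; apply: IH; lia.
  apply: HL' => j Hj; apply: IH; lia.
apply: funext => i; apply: (Hall (Z.to_nat (Z.abs i))); lia.
Qed.

Definition blk (A : finType) (N : nat) (x : config A) : {ffun 'I_(N + N).+1 -> A} :=
  [ffun i : 'I_(N + N).+1 => x (Z.of_nat i - Z.of_nat N)].

Lemma blk_agree (A : finType) (N : nat) (x x' : config A) :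
  blk N x = blk N x' <-> agree (Z.of_nat N) x x'.
Proof.
split.
  move=> E i Hi.
  have Hj : (Z.to_nat (i + Z.of_nat N) < (N + N).+1)%N by lia.
  have := congr1 (fun f : {ffun 'I_(N + N).+1 -> A} => f (Ordinal Hj)) E; rewrite /= !ffunE /=.
  by have -> : Z.of_nat (Z.to_nat (i + Z.of_nat N)) - Z.of_nat N = i by lia.
move=> H; apply/ffunP => j; rewrite !ffunE; apply: H.
have := ltn_ord j; lia.
Qed.

Definition Bl (A B : finType) (X : config A -> Prop) (phi : config A -> config B)
  (N : nat) (y : config B) : {set {ffun 'I_(N + N).+1 -> A}} :=
  [set b | `[< exists x, X x /\ phi x = y /\ blk N x = b >]].

Lemma inBl (A B : finType) (X : config A -> Prop) (phi : config A -> config B) N y b :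
  b \in Bl X phi N y <-> exists x, X x /\ phi x = y /\ blk N x = b.
Proof. by rewrite inE; split => [/asboolP|?]; [|apply/asboolP]. Qed.

Lemma wit_ex (A B : finType) (X : config A -> Prop) (phi : config A -> config B) N y
  (b : {ffun 'I_(N + N).+1 -> A}) :
  exists x, b \in Bl X phi N y -> X x /\ phi x = y /\ blk N x = b.
Proof.
case: (boolP (b \in Bl X phi N y)) => H.
  by have [x Hx] := proj1 (inBl _ _ _ _) H; exists x.
by exists (fun _ => b ord0) => H2; move/negP: H.
Qed.

Definition wit (A B : finType) (X : config A -> Prop) (phi : config A -> config B) N y
  (b : {ffun 'I_(N + N).+1 -> A}) : config A := sval (cid (wit_ex X phi y b)).

Lemma witP (A B : finType) (X : config A -> Prop) (phi : config A -> config B) N y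
  (b : {ffun 'I_(N + N).+1 -> A}) :
  b \in Bl X phi N y -> X (wit X phi y b) /\ phi (wit X phi y b) = y /\ blk N (wit X phi y b) = b.
Proof. exact: (svalP (cid (wit_ex X phi y b))). Qed.

Lemma card_le_map (A B : finType) (X : config A -> Prop) (phi : config A -> config B) N
  (Hinj : forall x x', X x -> X x' -> phi x = phi x' -> blk N x = blk N x' -> x = x')
  y1 y2 (f : config A -> config A) :
  (forall x, X x -> phi x = y1 -> X (f x) /\ phi (f x) = y2) ->
  (forall x x', X x -> X x' -> phi x = y1 -> phi x' = y1 -> f x = f x' -> x = x') ->
  (#|Bl X phi N y1| <= #|Bl X phi N y2|)%N.
Proof.
move=> Hf Hfi.
pose h (b : {ffun 'I_(N + N).+1 -> A}) := blk N (f (wit X phi y1 b)).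
have Hh : {in Bl X phi N y1 &, injective h}.
  move=> b b' Hb Hb'; rewrite /h => E.
  have [H1 [H2 H3]] := witP Hb; have [H1' [H2' H3']] := witP Hb'.
  have [G1 G2] := Hf _ H1 H2; have [G1' G2'] := Hf _ H1' H2'.
  have E2 := Hinj _ _ G1 G1' (etrans G2 (esym G2')) E.
  by rewrite -H3 -H3' (Hfi _ _ H1 H1' H2 H2' E2).
rewrite -(card_in_imset Hh); apply: subset_leq_card.
apply/subsetP => c /imsetP [b Hb ->]; apply/inBl.
have [H1 [H2 H3]] := witP Hb; have [G1 G2] := Hf _ H1 H2.
by exists (f (wit X phi y1 b)).
Qed.

Lemma fin_max (T : finType) (P : T -> Z -> Prop) :
  (forall b, exists K, forall K', K <= K' -> P b K') -> exists K, forall b, P b K.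
Proof.
move=> H.
suff [K HK] : exists K, forall b, b \in enum T -> forall K', K <= K' -> P b K'.
  by exists K => b; apply: (HK b _ K (Z.le_refl K)); rewrite mem_enum.
elim: (enum T) => [|a l [K IH]]; first by exists 0.
have [Ka Ha] := H a.
exists (Z.max K Ka) => b; rewrite in_cons => /orP [/eqP ->|Hb] K' HK'.
  apply: Ha; lia.
apply: IH => //; lia.
Qed.

Lemma lower_sc (A B : finType) (X : config A -> Prop) (Y : config B -> Prop)
  (phi : config A -> config B) :
  code X Y phi -> open_code X Y phi -> forall N y',
  exists K, forall y'', Y y'' -> agree K y' y'' -> Bl X phi N y' \subset Bl X phi N y''.
Proof.
move=> Hc Ho N y'.
have H : forall b, exists K, forall K', K <= K' -> forall y'', Y y'' -> agree K' y' y'' ->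
    b \in Bl X phi N y' -> b \in Bl X phi N y''.
  move=> b; case: (boolP (b \in Bl X phi N y')) => Hb; last first.
    by exists 0 => K' _ y'' _ _ Hb'; move/negP: Hb.
  have [x [Hx [Ex Bx]]] := proj1 (inBl _ _ _ _) Hb.
  pose U x'' := X x'' /\ blk N x'' = b.
  have HU : rel_open X U.
    split; first by move=> z [].
    move=> z [Hz Bz]; exists (Z.of_nat N) => z' Hz' Ha; split => //.
    by rewrite -Bz; apply/blk_agree/agree_sym.
  have [_ Hop] := Ho U HU.
  have [k Hk] := Hop y' (ex_intro _ x (conj (conj Hx Bx) Ex)).
  exists k => K' HK y'' Hy'' Ha _.
  have [z [[Hz Bz] Ez]] := Hk y'' Hy'' (agree_mono HK Ha).
  by apply/inBl; exists z.
have [K HK] := fin_max H.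
exists K => y'' Hy'' Ha; apply/subsetP => b Hb.
exact: (HK b y'' Hy'' Ha Hb).
Qed.

Lemma upper_sc (A B : finType) (X : config A -> Prop) (Y : config B -> Prop)
  (phi : config A -> config B) :
  closed_set X -> code X Y phi -> forall N y,
  exists K, forall y'', agree K y y'' -> Bl X phi N y'' \subset Bl X phi N y.
Proof.
move=> Hcl Hc N y.
have [_ [Hcont _]] := Hc.
have H : forall b, exists K, forall K', K <= K' -> forall y'', agree K' y y'' ->
    b \in Bl X phi N y'' -> b \in Bl X phi N y.
  move=> b; case: (boolP (b \in Bl X phi N y)) => Hb; first by exists 0.
  have [k Hk] : exists k, forall x, X x -> blk N x = b -> ~ agree k (phi x) y.
    apply: NNPP => Hn.
    have HR : forall n : nat, exists x, X x /\ blk N x = b /\ agree (Z.of_nat n) (phi x) y.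
      move=> n; apply: NNPP => Hn2; apply: Hn; exists (Z.of_nat n) => x Hx Bx Ha.
      by apply: Hn2; exists x.
    have [p Hp] := cluster HR.
    have HpX : X p.
      apply: Hcl => k; have [n [z [_ [[Hz _] Ha]]]] := Hp k 0%N.
      by exists z.
    have Hpb : blk N p = b.
      have [n [z [_ [[_ [Bz _]] Ha]]]] := Hp (Z.of_nat N) 0%N.
      by rewrite -Bz; apply/blk_agree.
    have Hpy : phi p = y.
      apply: funext => i; have [m Hm] := Hcont p HpX (Z.abs i).
      have [n [z [Hn3 [[Hz [_ Ha2]] Ha]]]] := Hp m (Z.to_nat (Z.abs i)).
      rewrite (Hm z Hz Ha i); last lia.
      apply: Ha2; lia.
    by move/negP: Hb; apply; apply/inBl; exists p.
  exists k => K' HK y'' Ha Hb''; exfalso.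
  have [x [Hx [Ex Bx]]] := proj1 (inBl _ _ _ _) Hb''.
  apply: (Hk x Hx Bx); rewrite Ex; apply: agree_sym; exact: agree_mono HK Ha.
have [K HK] := fin_max H.
exists K => y'' Ha; apply/subsetP => b Hb.
exact: (HK b y'' Ha Hb).
Qed.

Lemma card_shift (A B : finType) (X : config A -> Prop) (Y : config B -> Prop)
  (phi : config A -> config B) :
  shift_space X -> code X Y phi -> forall N,
  (forall x x', X x -> X x' -> phi x = phi x' -> blk N x = blk N x' -> x = x') ->
  forall q n, (#|Bl X phi N (shiftn n q)| <= #|Bl X phi N q|)%N.
Proof.
move=> HX Hc N Hinj q n.
apply: (card_le_map Hinj (f := shiftn (- n))).
  move=> x Hx Ex; split; first exact: X_shiftn (proj2 HX) _ _ Hx.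
  rewrite (phi_shiftn (proj2 HX) (proj2 (proj2 Hc))) // Ex shiftnA.
  have -> : - n + n = 0 by lia. by rewrite shiftn0.
move=> x x' _ _ _ _ E.
have := congr1 (shiftn n) E; rewrite !shiftnA.
have -> : n + - n = 0 by lia. by rewrite !shiftn0.
Qed.

Definition word (B : Type) (y : config B) (k : nat) : list B :=
  List.map (fun j : nat => y (Z.of_nat j - Z.of_nat k)) (List.seq 0 (k + k).+1).

Lemma word_len (B : Type) (y : config B) k : length (word y k) = (k + k).+1.
Proof. by rewrite /word length_map length_seq. Qed.

Lemma word_nth (B : Type) (y : config B) k j d :
  (j < (k + k).+1)%N -> List.nth j (word y k) d = y (Z.of_nat j - Z.of_nat k).
Proof.
move=> Hj; rewrite /word.
rewrite (nth_indep _ d (y (Z.of_nat 0 - Z.of_nat k))); last by rewrite length_map length_seq; lia.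
rewrite (map_nth (fun j : nat => y (Z.of_nat j - Z.of_nat k)) _ 0%N j).
rewrite seq_nth; last lia.
by [].
Qed.

Lemma word_is (B : Type) (Y : config B -> Prop) y k : Y y -> is_word Y (word y k).
Proof.
move=> Hy; exists y; split => //; exists (- Z.of_nat k) => j Hj d.
rewrite word_len in Hj; rewrite word_nth; last lia.
f_equal; lia.
Qed.

Lemma cat_app (T : Type) (s t : list T) : seq.cat s t = (s ++ t)%list.
Proof. by elim: s => //= a s ->. Qed.

Lemma irr_mix (B : finType) (Y : config B -> Prop) :
  shift_space Y -> irreducible Y -> forall y y', Y y -> Y y' -> forall k K : nat,
  exists q, Y q /\ agree (Z.of_nat k) y q /\ exists n, agree (Z.of_nat K) y' (shiftn n q).
Proof.
move=> HY Hirr y y' Hy Hy' k K.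
set u := word y k; set v := word y' K.
have [w Hw] := Hirr u v (word_is k Hy) (word_is K Hy').
have [p [Hp [i0 Hi0]]] := Hw.
rewrite !cat_app in Hi0.
have Lu : length u = (k + k).+1 by exact: word_len.
have Lv : length v = (K + K).+1 by exact: word_len.
exists (shiftn (i0 + Z.of_nat k) p); split; first exact: X_shiftn (proj2 HY) _ _ Hp.
split.
  move=> i Hi; rewrite /shiftn.
  set j := Z.to_nat (i + Z.of_nat k).
  have Hj : (j < length (u ++ w ++ v)%list)%N by rewrite !length_app; lia.
  have := Hi0 j Hj (y 0); rewrite app_nth1; last lia.
  rewrite /u word_nth; last lia.
  have -> : i + (i0 + Z.of_nat k) = i0 + Z.of_nat j by lia.
  move=> ->; f_equal; lia.
exists (Z.of_nat (length u + length w) + Z.of_nat K - Z.of_nat k) => i Hi; rewrite /shiftn.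
set j := (length u + length w + Z.to_nat (i + Z.of_nat K))%N.
have Hj : (j < length (u ++ w ++ v)%list)%N by rewrite !length_app; lia.
have := Hi0 j Hj (y' 0); rewrite app_nth2; last lia.
rewrite app_nth2; last lia.
replace (j - length u - length w)%coq_nat with (Z.to_nat (i + Z.of_nat K)) by lia.
rewrite /v word_nth; last lia.
have -> : i + (Z.of_nat (length u + length w) + Z.of_nat K - Z.of_nat k) + (i0 + Z.of_nat k)
  = i0 + Z.of_nat j by lia.
move=> ->; f_equal; lia.
Qed.

Lemma main_le (A B : finType) (X : config A -> Prop) (Y : config B -> Prop)
  (phi : config A -> config B) :
  shift_space X -> shift_space Y -> irreducible Y ->
  code X Y phi -> open_code X Y phi -> forall N,
  (forall x x', X x -> X x' -> phi x = phi x' -> blk N x = blk N x' -> x = x') ->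
  forall y y', Y y -> Y y' -> (#|Bl X phi N y'| <= #|Bl X phi N y|)%N.
Proof.
move=> HX HY Hirr Hc Ho N Hinj y y' Hy Hy'.
have [K1 HK1] := lower_sc Hc Ho N y'.
have [K2 HK2] := upper_sc (proj1 HX) Hc N y.
have [q [Hq [Haq [n Han]]]] := irr_mix HY Hirr Hy Hy' (Z.to_nat K2) (Z.to_nat K1).
have Hqn : Y (shiftn n q) by exact: X_shiftn (proj2 HY) _ _ Hq.
have Han' : agree K1 y' (shiftn n q) by apply: agree_mono Han; lia.
have Haq' : agree K2 y q by apply: agree_mono Haq; lia.
have S1 := HK1 _ Hqn Han'.
have S2 := HK2 q Haq'.
apply: leq_trans (subset_leq_card S1) _.
apply: leq_trans (card_shift HX Hc Hinj q n) (subset_leq_card S2).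
Qed.

Lemma In_mem (T : eqType) (x : T) (l : seq T) : List.In x l <-> x \in l.
Proof.
elim: l => [|a l IH] //=; rewrite in_cons; split.
  by case=> [->|/IH H]; [rewrite eqxx | rewrite H orbT].
by case/orP => [/eqP ->|/IH H]; [left | right].
Qed.

Lemma NoDup_map_uniq (T : eqType) (U : Type) (g : T -> U) (l : seq T) :
  uniq l -> {in l &, injective g} -> NoDup (List.map g l).
Proof.
elim: l => [|a l IH] /= Hu Hi; first by constructor.
case/andP: Hu => Ha Hl; constructor.
  move/in_map_iff => [b [Eb Hb]].
  have Hb' : b \in l by apply/In_mem.
  have Eba : b = a by apply: Hi; rewrite // in_cons ?Hb' ?eqxx ?orbT.
  by subst b; rewrite Hb' in Ha.
apply: IH => // x x' Hx Hx'; apply: Hi; by rewrite in_cons ?Hx ?Hx' orbT.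
Qed.

Lemma length_size (T : Type) (l : seq T) : length l = size l.
Proof. by elim: l => //= a l ->. Qed.

Theorem corollary2p9 (A B : finType) (X : config A -> Prop) (Y : config B -> Prop)
  (phi : config A -> config B) :
  shift_space X -> shift_space Y -> irreducible Y ->
  code X Y phi -> open_code X Y phi -> bi_closing X phi ->
  constant_to_one X Y phi.
Proof.
move=> HX HY Hirr Hc Ho Hbc.
have [N0 Hinj0] := closing_inj HX Hc Hbc.
have Hinj : forall x x', X x -> X x' -> phi x = phi x' -> blk N0 x = blk N0 x' -> x = x'.
  by move=> x x' Hx Hx' E Eb; apply: Hinj0 => //; apply/blk_agree.
case: (Classical_Prop.classic (exists y0, Y y0)) => [[y0 Hy0]|Hno]; last first.
  by exists 0%N => y Hy; exfalso; apply: Hno; exists y.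
exists #|Bl X phi N0 y0| => y Hy.
have Ec : #|Bl X phi N0 y| = #|Bl X phi N0 y0|.
  by apply/eqP; rewrite eqn_leq !(main_le HX HY Hirr Hc Ho Hinj).
pose g (b : {ffun 'I_(N0 + N0).+1 -> A}) := wit X phi y b.
exists (List.map g (enum (Bl X phi N0 y))); split.
  apply: NoDup_map_uniq; first exact: enum_uniq.
  move=> b b' Hb Hb' E; rewrite !mem_enum in Hb Hb'.
  have [_ [_ G3]] := witP Hb; have [_ [_ G3']] := witP Hb'.
  by rewrite -G3 -G3'; congr blk.
split; first by rewrite length_map length_size -cardE.
move=> x; split.
  move=> [Hx Ex].
  set b := blk N0 x.
  have Hb : b \in Bl X phi N0 y by apply/inBl; exists x.
  have [G1 [G2 G3]] := witP Hb.
  have E : x = g b.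
    apply: Hinj => //; first by rewrite Ex G2.
  apply/in_map_iff; exists b; split; first by rewrite E.
  by apply/In_mem; rewrite mem_enum.
move/in_map_iff => [b [<- Hb]].
have Hb' : b \in Bl X phi N0 y by rewrite -mem_enum; apply/In_mem.
by have [G1 [G2 _]] := witP Hb'.
Qed.
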